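(* Let $0 \neq q \in \mathbb{C}$ with $q^{2} \neq 1$, let $\xi = -(1+q)^{2}/(q-q^{-1})$, and let $a, b, c$ be elements of an associative algebra over $\mathbb{C}$ satisfying $$ac = q^{2} ca + \xi b^{2}, \qquad ab = q^{2} ba, \qquad bc = q^{2} cb.$$ Define complex numbers $\phi_{\beta}$, $\beta \in \mathbb{Z}_{+}$, recursively by $\phi_{0} = 1$, $\phi_{1} = 1$, and $\phi_{\beta} = \phi_{\beta-1} + \xi [\beta-1]_{q^{2}} \phi_{\beta-2}$ for $\beta \geq 2$. Then for every $n \in \mathbb{N}$, $$(a + b + c)^{n} = \sum_{\substack{\alpha,\beta,\gamma \in \mathbb{Z}_{+}\\ \alpha + \beta + \gamma = n}} \frac{ [n]_{q^{2}}!\, \phi_{\beta} }{ [\alpha]_{q^{2}}!\, [\beta]_{q^{2}}!\, [\gamma]_{q^{2}}! }\; c^{\alpha} b^{\beta} a^{\gamma}.$$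
   Context: $\mathbb{N} = \{1,2,3,\ldots\}$ and $\mathbb{Z}_{+} = \mathbb{N}\cup\{0\}$. For $0 \neq p \in \mathbb{C}$ with $p \neq 1$ and $n \in \mathbb{Z}_{+}$: $[n]_{p} = \frac{1-p^{n}}{1-p}$, $[n]_{p}! = [n]_{p}[n-1]_{p}\cdots[1]_{p}$, and $[0]_{p}! = 1$; here these are used with $p = q^{2}$. *)

(* Defs.v *)
From HB Require Import structures.
From mathcomp Require Import all_boot all_order all_algebra.
From Stdlib Require Rdefinitions.
From mathcomp Require Import Rstruct.
From mathcomp.real_closed Require Import complex.
Set Implicit Arguments. Unset Strict Implicit. Unset Printing Implicit Defensive.
Import Order.TTheory GRing.Theory Num.Theory.
Local Open Scope ring_scope.

Definition C : fieldType := (Rdefinitions.R)[i].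

(* [n]_p = (1 - p^n)/(1 - p)   (used with p <> 1) *)
Definition qint (p : C) (n : nat) : C := (1 - p ^+ n) / (1 - p).

Definition qfact (p : C) (n : nat) : C := \prod_(1 <= k < n.+1) qint p k.

Fixpoint phi_aux (xi p : C) (n : nat) : C * C :=
  (* returns (phi_n, phi_(n+1)) *)
  match n with
  | 0 => (1, 1)
  | m.+1 => let: (x, y) := phi_aux xi p m in
            (y, y + xi * qint p m.+1 * x)
  end.
Definition phi (xi p : C) (n : nat) : C := (phi_aux xi p n).1.

(* The q-multinomial coefficient [n]_t! / ([al]_t! [be]_t! [ga]_t!) as a
   formal quotient: computed in {poly C} with [k]_t = 1 + t + ... + t^(k-1)
   (the polynomial identity (1-t^k)/(1-t)), where the division is exact, and
   then evaluated at t = p. *)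
Definition qint_poly (k : nat) : {poly C} := \sum_(i < k) 'X^i.
Definition qfact_poly (k : nat) : {poly C} := \prod_(1 <= j < k.+1) qint_poly j.
Definition qmultinom (p : C) (al be ga : nat) : C :=
  ((qfact_poly (al + be + ga)) %/
     (qfact_poly al * qfact_poly be * qfact_poly ga)).[p].

(* Main.v *)
Require Import Defs.
From HB Require Import structures.
From mathcomp Require Import all_boot all_order all_algebra.
From mathcomp Require Import ring zify.
From Stdlib Require Rdefinitions.
From mathcomp Require Import Rstruct.
From mathcomp.real_closed Require Import complex.
Import GRing.Theory.
Local Open Scope ring_scope.

Lemma qint_polyD a b : qint_poly (a + b) = qint_poly a + 'X^a * qint_poly b.
Proof.
rewrite /qint_poly big_split_ord /= mulr_sumr; congr (_ + _).
by apply: eq_bigr => i _; rewrite exprD.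
Qed.

Lemma qint_poly0 : qint_poly 0 = 0.
Proof. by rewrite /qint_poly big_ord0. Qed.

Lemma qint_poly1 : qint_poly 1 = 1.
Proof. by rewrite /qint_poly big_ord1 expr0. Qed.

Lemma qint_polyS k : qint_poly k.+1 = 1 + 'X * qint_poly k.
Proof. by rewrite -add1n qint_polyD qint_poly1 expr1. Qed.

Lemma qint_poly_neq0 k : qint_poly k.+1 != 0.
Proof.
apply/eqP => H; have := congr1 (horner^~ (0 : C)) H.
rewrite qint_polyS !hornerE /= => h; have := @oner_neq0 C; by rewrite h eqxx.
Qed.

Lemma qfact_poly0 : qfact_poly 0 = 1.
Proof. by rewrite /qfact_poly big_geq. Qed.

Lemma qfact_polyS k : qfact_poly k.+1 = qfact_poly k * qint_poly k.+1.
Proof. by rewrite /qfact_poly big_nat_recr. Qed.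

Lemma qfact_poly_neq0 k : qfact_poly k != 0.
Proof.
elim: k => [|k IH]; first by rewrite qfact_poly0 oner_eq0.
by rewrite qfact_polyS mulf_neq0 // qint_poly_neq0.
Qed.

Definition Dp i j g := qfact_poly i * qfact_poly j * qfact_poly g.

Lemma Dp_neq0 i j g : Dp i j g != 0.
Proof. by rewrite /Dp !mulf_neq0 // qfact_poly_neq0. Qed.

Lemma DpSg i j g : Dp i j g.+1 = Dp i j g * qint_poly g.+1.
Proof. by rewrite /Dp qfact_polyS; ring. Qed.
Lemma DpSj i j g : Dp i j.+1 g = Dp i j g * qint_poly j.+1.
Proof. by rewrite /Dp qfact_polyS; ring. Qed.
Lemma DpSi i j g : Dp i.+1 j g = Dp i j g * qint_poly i.+1.
Proof. by rewrite /Dp qfact_polyS; ring. Qed.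

Lemma qint_poly3 i j g :
  qint_poly (i + j + g) = qint_poly g + 'X^g * qint_poly j + 'X^(g + j) * qint_poly i.
Proof.
rewrite (addnC i) addnC qint_polyD qint_polyD exprD; ring.
Qed.

Lemma Dp_dvd N i j g : (i + j + g = N)%N -> Dp i j g %| qfact_poly N.
Proof.
elim: N i j g => [|N IH] i j g H.
  have [-> -> ->] : [/\ i = 0%N, j = 0%N & g = 0%N] by split; lia.
  by rewrite /Dp qfact_poly0 !mul1r dvdpp.
rewrite qfact_polyS -H qint_poly3 !mulrDr.
apply: dvdp_add; [apply: dvdp_add|].
- case: g H => [|g] H; first by rewrite qint_poly0 mulr0 dvdp0.
  by rewrite DpSg dvdp_mul // IH //; lia.
- case: j H => [|j] H; first by rewrite qint_poly0 !mulr0 dvdp0.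
  rewrite DpSj mulrCA dvdp_mull // dvdp_mul // IH //; lia.
- case: i H => [|i] H; first by rewrite qint_poly0 !mulr0 dvdp0.
  rewrite DpSi mulrCA dvdp_mull // dvdp_mul // IH //; lia.
Qed.

Definition Mp i j g := qfact_poly (i + j + g) %/ Dp i j g.

Lemma MpD i j g : Mp i j g * Dp i j g = qfact_poly (i + j + g).
Proof. by rewrite /Mp divpK // (@Dp_dvd _ i j g erefl). Qed.

Lemma MpP i j g : (0 < i + j + g)%N ->
  Mp i j g = (if g is g'.+1 then Mp i j g' else 0)
           + (if j is j'.+1 then 'X^g * Mp i j' g else 0)
           + (if i is i'.+1 then 'X^(g + j) * Mp i' j g else 0).
Proof.
move=> H; apply: (mulIf (Dp_neq0 i j g)).
rewrite MpD; case E: (i + j + g)%N H => [|N] // _.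
rewrite qfact_polyS -E qint_poly3 !mulrDl !mulrDr.
congr (_ + _ + _).
- case: g E => [|g] E; first by rewrite qint_poly0 !mul0r !mulr0.
  have h : Mp i j g * Dp i j g = qfact_poly N by rewrite MpD; congr qfact_poly; lia.
  by rewrite DpSg -h; ring.
- case: j E => [|j] E; first by rewrite qint_poly0 !mul0r !mulr0.
  have h : Mp i j g * Dp i j g = qfact_poly N by rewrite MpD; congr qfact_poly; lia.
  by rewrite DpSj -h; ring.
- case: i E => [|i] E; first by rewrite qint_poly0 !mul0r !mulr0.
  have h : Mp i j g * Dp i j g = qfact_poly N by rewrite MpD; congr qfact_poly; lia.
  by rewrite DpSi -h; ring.
Qed.

Lemma MpQ i j g : qint_poly j.+1 * Mp i j.+1 g = qint_poly g.+1 * Mp i j g.+1.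
Proof.
apply: (mulIf (mulf_neq0 (Dp_neq0 i j g) (qint_poly_neq0 g))).
have h1 := MpD i j.+1 g; have h2 := MpD i j g.+1.
rewrite DpSj in h1; rewrite DpSg in h2.
transitivity (qint_poly g.+1 * (Mp i j.+1 g * (Dp i j g * qint_poly j.+1))); first by ring.
transitivity (qint_poly g.+1 * (Mp i j g.+1 * (Dp i j g * qint_poly g.+1))); last by ring.
by rewrite h1 h2; congr (_ * qfact_poly _); lia.
Qed.

Section Coef.
Variables (p xi : C).
Hypothesis hp : p != 1.

Definition m i j g := (Mp i j g).[p].
Definition qs k := (qint_poly k).[p].

Lemma qmultinomE i j g : qmultinom p i j g = m i j g.
Proof. by []. Qed.

Lemma qs0 : qs 0 = 0.
Proof. by rewrite /qs qint_poly0 hornerE. Qed.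

Lemma qsS k : qs k.+1 = 1 + p * qs k.
Proof. by rewrite /qs qint_polyS !hornerE. Qed.

Lemma qint_qs k : qint p k = qs k.
Proof.
rewrite /qint /qs /qint_poly horner_sum.
have h : 1 - p != 0 by rewrite subr_eq0 eq_sym.
apply: (mulfI h); rewrite mulrCA divff // mulr1.
have := subrX1 p k => e.
rewrite -opprB e -mulNr opprB; congr (_ * _).
by apply: eq_bigr => i _; rewrite hornerXn.
Qed.

Lemma mP i j g : (0 < i + j + g)%N ->
  m i j g = (if g is g'.+1 then m i j g' else 0)
          + (if j is j'.+1 then p ^+ g * m i j' g else 0)
          + (if i is i'.+1 then p ^+ (g + j) * m i' j g else 0).
Proof.
move=> H; rewrite /m (MpP _ _ _ H).
by case: g {H} => [|g]; case: j => [|j]; case: i => [|i]; rewrite !hornerE.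
Qed.

Lemma mQ i j g : qs j.+1 * m i j.+1 g = qs g.+1 * m i j g.+1.
Proof. by rewrite /qs /m -!hornerM MpQ. Qed.

Lemma phi0 : phi xi p 0 = 1. Proof. by []. Qed.
Lemma phi1 : phi xi p 1 = 1. Proof. by []. Qed.
Lemma phiSS j : phi xi p j.+2 = phi xi p j.+1 + xi * qint p j.+1 * phi xi p j.
Proof. by rewrite /phi /=; case: (phi_aux xi p j). Qed.

Definition F i j g := m i j g * phi xi p j.

Lemma coefF i j g : (0 < i + j + g)%N ->
  F i j g = (if g is g'.+1 then F i j g' else 0)
          + (if j is j'.+1 then F i j' g * p ^+ g else 0)
          + (if i is i'.+1 then F i' j g * p ^+ (g + j) else 0)
          + (if j is j'.+2 then F i j' g.+1 * (xi * p ^+ g * qs g.+1) else 0).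
Proof.
move=> H; rewrite /F (mP _ _ _ H) !exprD.
case: j H => [|[|j]] H.
- by case: g {H} => [|g]; case: i => [|i]; rewrite /=; ring.
- by case: g {H} => [|g]; case: i => [|i]; rewrite /= ?phi1 ?phi0; ring.
- rewrite phiSS qint_qs.
  have e := mQ i j g.
  case: g {H} e => [|g] e; case: i e => [|i] e /=.
  all: apply/eqP; rewrite -subr_eq0; apply/eqP.
  + apply: (@eq_trans _ _ (p ^+ 0 * xi * phi xi p j * (qs j.+1 * m 0 j.+1 0 - qs 1 * m 0 j 1)) _);
      [ring | by rewrite e subrr mulr0].
  + apply: (@eq_trans _ _ (p ^+ 0 * xi * phi xi p j * (qs j.+1 * m i.+1 j.+1 0 - qs 1 * m i.+1 j 1)) _);
      [ring | by rewrite e subrr mulr0].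
  + apply: (@eq_trans _ _ (p ^+ g.+1 * xi * phi xi p j * (qs j.+1 * m 0 j.+1 g.+1 - qs g.+2 * m 0 j g.+2)) _);
      [ring | by rewrite e subrr mulr0].
  + apply: (@eq_trans _ _ (p ^+ g.+1 * xi * phi xi p j * (qs j.+1 * m i.+1 j.+1 g.+1 - qs g.+2 * m i.+1 j g.+2)) _);
      [ring | by rewrite e subrr mulr0].
Qed.
Definition f n i j := if (i + j <= n)%N then F i j (n - i - j) else 0.

Lemma coef n i j : f n.+1 i j =
  f n i j + (if j is j'.+1 then f n i j' * p ^+ (n - i - j') else 0)
  + (if i is i'.+1 then f n i' j * p ^+ (n - i' - j + j) else 0)
  + (if j is j'.+2 then f n i j' * (xi * p ^+ (n - i - j').-1 * qs (n - i - j')) else 0).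
Proof.
rewrite /f; case: (leqP (i + j) n.+1) => hij.
- rewrite (@coefF i j (n.+1 - i - j)); last lia.
  congr (_ + _ + _ + _).
  + case: ifP => h.
      by have -> : (n.+1 - i - j = (n - i - j).+1)%N by lia.
    by have -> : (n.+1 - i - j = 0)%N by lia.
  + case: j hij => [|j] hij //=. rewrite ifT; last lia.
    by have -> : (n.+1 - i - j.+1 = n - i - j)%N by lia.
  + case: i hij => [|i] hij //=. rewrite ifT; last lia.
    by have -> : (n.+1 - i.+1 - j = n - i - j)%N by lia.
  + case: j hij => [|[|j]] hij //=. rewrite ifT; last lia.
    by have -> : (n - i - j = (n.+1 - i - j.+2).+1)%N by lia.
- rewrite ifF; last lia.
  case: j hij => [|[|j]] hij; case: i hij => [|i] hij /=.
  all: repeat (case: ifP => ?; [try lia|]).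
  all: try (exfalso; lia).
  all: try (match goal with |- context[qs ?k] => have -> : k = 0%N by lia end).
  all: rewrite ?qs0; ring.
Qed.
Lemma f_out n i j : (n < i + j)%N -> f n i j = 0.
Proof. by move=> h; rewrite /f ifF //; lia. Qed.

Lemma f_in n i j : (i + j <= n)%N -> f n i j = F i j (n - i - j).
Proof. by move=> h; rewrite /f h. Qed.
End Coef.

Lemma shift1 (V : nmodType) K (u v : nat -> V) :
  v 0%N = 0 -> (forall j, v j.+1 = u j) -> u K = 0 ->
  \sum_(j < K.+1) v j = \sum_(j < K.+1) u j.
Proof.
move=> h0 hS hK; rewrite big_ord_recl big_ord_recr /= h0 hK add0r addr0.
by apply: eq_bigr => j _; rewrite hS.
Qed.

Lemma shift2 (V : nmodType) K (u v : nat -> V) :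
  v 0%N = 0 -> v 1%N = 0 -> (forall j, v j.+2 = u j) -> u K = 0 -> u K.+1 = 0 ->
  \sum_(j < K.+2) v j = \sum_(j < K.+2) u j.
Proof.
move=> h0 h1 hS hK hK1; rewrite big_ord_recl big_ord_recl big_ord_recr big_ord_recr /=.
rewrite h0 h1 hK hK1 !add0r !addr0.
by apply: eq_bigr => j _; rewrite hS.
Qed.

Section Alg.
Variables (A : algType C) (p xi : C) (a b c : A).
Hypothesis hp : p != 1.
Hypothesis hac : a * c = p *: (c * a) + xi *: b ^+ 2.
Hypothesis hab : a * b = p *: (b * a).
Hypothesis hbc : b * c = p *: (c * b).

Lemma L_ab g : a ^+ g * b = p ^+ g *: (b * a ^+ g).
Proof.
elim: g => [|g IH]; first by rewrite !expr0 mul1r mulr1 scale1r.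
rewrite exprS -mulrA IH -scalerAr [a * (b * _)]mulrA hab -scalerAl scalerA.
by rewrite -mulrA exprSr.
Qed.

Lemma L_bc j : b ^+ j * c = p ^+ j *: (c * b ^+ j).
Proof.
elim: j => [|j IH]; first by rewrite !expr0 mul1r mulr1 scale1r.
rewrite exprS -mulrA IH -scalerAr [b * (c * _)]mulrA hbc -scalerAl scalerA.
by rewrite -mulrA exprSr.
Qed.

Lemma L_ab2 : a * b ^+ 2 = p ^+ 2 *: (b ^+ 2 * a).
Proof.
rewrite [b ^+ 2]expr2 [a * (b * b)]mulrA hab -scalerAl -[b * a * b]mulrA hab.
rewrite -scalerAr scalerA [b * (b * a)]mulrA; congr (_ *: _).
Qed.

Lemma L_ac g : a ^+ g.+1 * c =
  p ^+ g.+1 *: (c * a ^+ g.+1) + (xi * p ^+ g * qs p g.+1) *: (b ^+ 2 * a ^+ g).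
Proof.
elim: g => [|g IH].
  by rewrite !expr1 expr0 hac qsS qs0 mulr0 addr0 !mulr1.
have -> : a ^+ g.+2 * c = a * (a ^+ g.+1 * c) by rewrite exprS mulrA.
rewrite IH mulrDr -!scalerAr [a * (c * _)]mulrA [a * (b ^+ 2 * _)]mulrA hac L_ab2.
rewrite mulrDl -!scalerAl -[c * a * _]mulrA -exprS -[b ^+ 2 * a * _]mulrA -exprS.
rewrite !scalerDr !scalerA -addrA -scalerDl.
congr (_ *: _ + _ *: _); first by rewrite !exprS; ring.
have e : p ^+ g.+1 * xi + xi * p ^+ g * qs p g.+1 * p ^+ 2 = xi * p ^+ g.+1 * qs p g.+2.
  by rewrite (qsS p g.+1) !exprS; ring.
exact: e.
Qed.

Definition mono i j g := c ^+ i * b ^+ j * a ^+ g.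

Lemma mono_a i j g : mono i j g * a = mono i j g.+1.
Proof. by rewrite /mono exprSr !mulrA. Qed.

Lemma mono_b i j g : mono i j g * b = p ^+ g *: mono i j.+1 g.
Proof.
rewrite /mono -[c ^+ i * b ^+ j * a ^+ g * b]mulrA L_ab -scalerAr.
by rewrite exprSr !mulrA.
Qed.

Lemma mono_c i j g : mono i j g * c =
  p ^+ (g + j) *: mono i.+1 j g + (xi * p ^+ g.-1 * qs p g) *: mono i j.+2 g.-1.
Proof.
case: g => [|g].
  rewrite /mono !expr0 !mulr1 qs0 mulr0 scale0r addr0 add0n -mulrA L_bc -scalerAr.
  by rewrite exprSr mulrA.
have h1 : c ^+ i * b ^+ j * (c * a ^+ g.+1) = p ^+ j *: mono i.+1 j g.+1.
  rewrite mulrA -(mulrA (c ^+ i)) L_bc -scalerAr -scalerAl /mono [c ^+ i.+1]exprSr.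
  by rewrite !mulrA.
have h2 : c ^+ i * b ^+ j * (b ^+ 2 * a ^+ g) = mono i j.+2 g.
  by rewrite /mono -(addn2 j) exprD !mulrA.
rewrite /mono -[c ^+ i * b ^+ j * a ^+ g.+1 * c]mulrA L_ac mulrDr -!scalerAr.
rewrite -/(mono i j.+2 g) h1 h2 scalerA /=; congr (_ *: _ + _).
by rewrite exprD.
Qed.
Lemma m000 : m p 0 0 0 = 1.
Proof. by rewrite /m /Mp /Dp qfact_poly0 !mul1r divp1 hornerC. Qed.

Lemma main n K : (n < K)%N ->
  (a + b + c) ^+ n = \sum_(i < K) \sum_(j < K) f p xi n i j *: mono i j (n - i - j).
Proof.
elim: n K => [|n IH] K hK.
  case: K hK => [|K] // _.
  rewrite big_ord_recl [X in _ = _ + X]big1 ?addr0; last first.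
    by move=> i _; apply: big1 => j _; rewrite f_out ?scale0r //=; lia.
  rewrite big_ord_recl [X in _ = _ + X]big1 ?addr0; last first.
    by move=> j _; rewrite f_out ?scale0r //=; lia.
  by rewrite f_in // /F m000 phi0 mulr1 scale1r /mono !expr0 !mulr1.
case: K hK => [|[|K]] // hK.
rewrite exprSr (IH K.+2); last lia.
rewrite mulr_suml; under eq_bigr => i _ do rewrite mulr_suml.
under eq_bigr => i _ do under eq_bigr => j _ do
  rewrite -scalerAl !mulrDr mono_a mono_b mono_c !scalerDr !scalerA !addrA.
under [RHS]eq_bigr => i _ do under eq_bigr => j _ do rewrite (coef p xi hp) !scalerDl.
under eq_bigr => i _ do rewrite !big_split.
under [RHS]eq_bigr => i _ do rewrite !big_split.
rewrite !big_split; congr (_ + _ + _ + _).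
- apply: eq_bigr => i _; apply: eq_bigr => j _.
  case h: (i + j <= n)%N.
    by congr (_ *: mono _ _ _); lia.
  by rewrite /f h !scale0r.
- apply: eq_bigr => i _; symmetry.
  apply: (@shift1 _ K.+1
    (fun j : nat => (f p xi n i j * p ^+ (n - i - j)) *: mono i j.+1 (n - i - j))
    (fun j : nat => (if j is j'.+1 then f p xi n i j' * p ^+ (n - i - j') else 0)
                     *: mono i j (n.+1 - i - j))).
  + by rewrite scale0r.
  + by move=> j /=; congr (_ *: mono _ _ _); lia.
  + by rewrite /f ifF ?mul0r ?scale0r //; lia.
- symmetry.
  apply: (@shift1 _ K.+1
    (fun i : nat => \sum_(j < K.+2) (f p xi n i j * p ^+ (n - i - j + j)) *: mono i.+1 j (n - i - j))
    (fun i : nat => \sum_(j < K.+2) (if i is i'.+1 then f p xi n i' j * p ^+ (n - i' - j + j) else 0)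
                     *: mono i j (n.+1 - i - j))).
  + by apply: big1 => j _; rewrite scale0r.
  + by move=> i /=.
  + by apply: big1 => j _; rewrite /f ifF ?mul0r ?scale0r //; lia.
- apply: eq_bigr => i _; symmetry.
  apply: (@shift2 _ K
    (fun j : nat => (f p xi n i j * (xi * p ^+ (n - i - j).-1 * qs p (n - i - j)))
                     *: mono i j.+2 (n - i - j).-1)
    (fun j : nat => (if j is j'.+2 then f p xi n i j' * (xi * p ^+ (n - i - j').-1 * qs p (n - i - j')) else 0)
                     *: mono i j (n.+1 - i - j))).
  + by rewrite scale0r.
  + by rewrite scale0r.
  + by move=> j /=; congr (_ *: mono _ _ _); lia.
  + rewrite /f; case: ifP => h; last by rewrite mul0r scale0r.
    have -> : (n - i - K = 0)%N by lia.
    by rewrite qs0 !mulr0 scale0r.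
  + by rewrite /f ifF ?mul0r ?scale0r //; lia.
Qed.
End Alg.

Theorem lemma2 (A : algType C) (q : C) (a b c : A)
  (hq0 : q != 0) (hq2 : q ^+ 2 != 1)
  (hac : a * c = q ^+ 2 *: (c * a)
                 + (- (1 + q) ^+ 2 / (q - q^-1)) *: (b ^+ 2))
  (hab : a * b = q ^+ 2 *: (b * a))
  (hbc : b * c = q ^+ 2 *: (c * b))
  (n : nat) (hn : (0 < n)%N) :
  (a + b + c) ^+ n =
  \sum_(al < n.+1) \sum_(be < n.+1 | (al + be <= n)%N)
     (qmultinom (q ^+ 2) al be (n - al - be)
        * phi (- (1 + q) ^+ 2 / (q - q^-1)) (q ^+ 2) be)
       *: (c ^+ al * b ^+ be * a ^+ (n - al - be)).
Proof.
rewrite (@main A (q ^+ 2) _ a b c hq2 hac hab hbc n n.+1 (ltnSn n)).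
apply: eq_bigr => i _; rewrite [RHS]big_mkcond; apply: eq_bigr => j _.
case: (leqP (i + j) n) => h.
  by rewrite f_in // h.
by rewrite f_out // scale0r.
Qed.
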